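(* There exists a sequence $(G_n)_{n\in\mathbb{N}}$ of connected graphs such that $|V(G_n)|=n$ for all $n$, $R_2(G_n)=O(n\log n)$ and $R_3(G_n)=\Omega(n\log^2 n)$.
   Context: For a graph $G$ and integer $r\geqslant 2$, the $r$-colour Ramsey number $R_r(G)$ is the smallest integer $N$ such that every colouring of the edges of the complete graph $K_N$ with $r$ colours contains a copy of $G$ all of whose edges have the same colour. *)

(* Defs.v *)
From mathcomp Require Import all_boot.
From Stdlib Require Import Reals.

Set Implicit Arguments.
Unset Strict Implicit.
Unset Printing Implicit Defensive.

Definition simple_graph (n : nat) (e : rel 'I_n) : Prop :=
  (forall x y, e x y = e y x) /\ (forall x, e x x = false).

Definition connected_graph (n : nat) (e : rel 'I_n) : Prop :=
  forall x y : 'I_n, connect e x y.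

(* An r-colouring of the edges of K_N: a symmetric map on pairs of vertices
   (values on the diagonal are irrelevant). *)
Definition edge_colouring (r N : nat) (col : 'I_N -> 'I_N -> 'I_r) : Prop :=
  forall x y, col x y = col y x.

Definition mono_copy (r N n : nat) (col : 'I_N -> 'I_N -> 'I_r)
  (e : rel 'I_n) (c : 'I_r) : Prop :=
  exists f : 'I_n -> 'I_N, injective f /\
    forall u v, e u v -> col (f u) (f v) = c.

Definition ramsey_arrow (r N n : nat) (e : rel 'I_n) : Prop :=
  forall col : 'I_N -> 'I_N -> 'I_r, edge_colouring col ->
    exists c : 'I_r, mono_copy col e c.

(* R_r(G) <= M  (R_r(G) is the least N with K_N -> (G)_r). *)
Definition ramsey_le (r n : nat) (e : rel 'I_n) (M : R) : Prop :=
  exists N : nat, (INR N <= M)%R /\ ramsey_arrow r N e.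

Definition ramsey_ge (r n : nat) (e : rel 'I_n) (M : R) : Prop :=
  forall N : nat, (INR N < M)%R -> ~ ramsey_arrow r N e.

(* Main.v *)
Require Import Defs.
From Stdlib Require Import Reals Lra Psatz.
From mathcomp Require Import all_boot zify.
Set Implicit Arguments. Unset Strict Implicit. Unset Printing Implicit Defensive.

Section Comb.
Variable T : finType.

Definition clq (r : rel T) (Q : {set T}) :=
  forall x y, x \in Q -> y \in Q -> x != y -> r x y.

Lemma card_split (A : {set T}) (p : pred T) :
  #|[set y in A | p y]| + #|[set y in A | ~~ p y]| = #|A|.
Proof.
rewrite -(cardsID [set y | p y] A); congr (_ + _); apply: eq_card => y;
by rewrite !inE // andbC.
Qed.

Lemma clq0 r : clq r set0.
Proof. by move=> x y; rewrite inE. Qed.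

Lemma clq_add r x Q : (forall a b, r a b = r b a) -> clq r Q ->
  (forall y, y \in Q -> r x y) -> clq r (x |: Q).
Proof.
move=> rs cQ hx a b; rewrite !inE => /orP[/eqP->|aQ] /orP[/eqP->|bQ].
- by rewrite eqxx.
- by move=> _; apply: hx.
- by move=> _; rewrite rs; apply: hx.
- by apply: cQ.
Qed.

Lemma step_card (S Q : {set T}) x (p : pred T) :
  Q \subset [set y in S :\ x | p y] -> x \in S ->
  x |: Q \subset S /\ #|x |: Q| = #|Q|.+1.
Proof.
move=> sQ xS; split.
  apply/subsetP => y; rewrite !inE => /orP[/eqP->//|yQ].
  by move/subsetP: sQ => /(_ y yQ); rewrite !inE => /andP[/andP[]].
rewrite cardsU1; have -> : x \notin Q.
  by apply/negP => /(subsetP sQ); rewrite !inE eqxx.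
by [].
Qed.

Lemma ramsey (r : rel T) (rs : forall a b, r a b = r b a) s :
  forall a b (S : {set T}), a + b = s -> 2 ^ s <= #|S| ->
  (exists Q : {set T}, Q \subset S /\ clq r Q /\ a <= #|Q|) \/
  (exists Q : {set T}, Q \subset S /\ clq (fun x y => ~~ r x y) Q /\ b <= #|Q|).
Proof.
have nrs : forall a b, ~~ r a b = ~~ r b a by move=> a b; rewrite rs.
elim: s => [|s IH] a b S hab hS.
  left; exists set0; split; first exact: sub0set.
  by split; [exact: clq0| rewrite cards0; lia].
case: a hab => [|a] hab.
  by left; exists set0; split; [exact: sub0set | split; [exact: clq0|done]].
case: b hab => [|b] hab.
  by right; exists set0; split; [exact: sub0set | split; [exact: clq0|done]].
have : 0 < #|S| by have := expn_gt0 2 s.+1; lia.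
case/card_gt0P => x xS.
have hc := card_split (S :\ x) (r x).
have h1 := cardsD1 x S; rewrite xS in h1.
have [hR|hR] : 2 ^ s <= #|[set y in S :\ x | r x y]| \/
               2 ^ s <= #|[set y in S :\ x | ~~ r x y]|.
  rewrite expnS in hS; lia.
- have [[Q [sQ [cQ hQ]]]|[Q [sQ [cQ hQ]]]] := IH a b.+1 _ ltac:(lia) hR.
  + left; exists (x |: Q); have [s1 s2] := step_card sQ xS.
    split=> //; split; last by lia.
    apply: clq_add => // y /(subsetP sQ); rewrite !inE => /andP[].
    by [].
  + right; exists Q; split; last by [].
    apply: subset_trans sQ _; apply/subsetP => y; rewrite !inE => /andP[/andP[]].
    by [].
- have [[Q [sQ [cQ hQ]]]|[Q [sQ [cQ hQ]]]] := IH a.+1 b _ ltac:(lia) hR.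
  + left; exists Q; split; last by [].
    apply: subset_trans sQ _; apply/subsetP => y; rewrite !inE => /andP[/andP[]].
    by [].
  + right; exists (x |: Q); have [s1 s2] := step_card sQ xS.
    split=> //; split; last by lia.
    apply: clq_add => // y /(subsetP sQ); rewrite !inE => /andP[].
    by [].
Qed.

Lemma greedy (r : rel T) (rs : forall a b, r a b = r b a) d m :
  forall (D : {set T}),
  (forall x, x \in D -> #|[set y in D :\ x | ~~ r x y]| <= d) ->
  m * d.+1 <= #|D| -> exists Q : {set T}, Q \subset D /\ clq r Q /\ m <= #|Q|.
Proof.
elim: m => [|m IH] D hD hm.
  by exists set0; split; [exact: sub0set | split; [exact: clq0|done]].
have : 0 < #|D| by lia.
case/card_gt0P => x xD.
have hc := card_split (D :\ x) (r x).
have h1 := cardsD1 x D; rewrite xD in h1.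
have hx := hD x xD.
have hD' : forall z, z \in [set y in D :\ x | r x y] ->
   #|[set y in [set y in D :\ x | r x y] :\ z | ~~ r z y]| <= d.
  move=> z; rewrite !inE => /andP[/andP[zx zD] _].
  apply: leq_trans (hD z zD); apply: subset_leq_card; apply/subsetP => y.
  by rewrite !inE => /andP[/andP[-> /andP[/andP[_ ->] _]] ->].
have hm' : m * d.+1 <= #|[set y in D :\ x | r x y]| by lia.
have [Q [sQ [cQ hQ]]] := IH _ hD' hm'.
exists (x |: Q); have [s1 s2] := step_card sQ xD.
split=> //; split; last by lia.
apply: clq_add => // y /(subsetP sQ); rewrite !inE => /andP[].
by [].
Qed.


Definition nbr (r : rel T) x := [set y in [set: T] :\ x | r x y].
Definition good (r : rel T) k n := exists (Q : {set T}) x0,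
  clq r Q /\ k <= #|Q| /\ x0 \in Q /\ n.-1 <= #|nbr r x0|.

Lemma deg_sum r x : #|nbr r x| + #|nbr (fun a b => ~~ r a b) x| = #|T|.-1.
Proof.
rewrite /nbr card_split; have := cardsD1 x [set: T]; rewrite inE cardsT.
by move=> ->.
Qed.

Lemma upper (r : rel T) (rs : forall a b, r a b = r b a) k n :
  0 < k -> 1 < n -> 4 ^ k + 2 * (k * n.-1) + 2 * n <= #|T| ->
  good r k n \/ good (fun a b => ~~ r a b) k n.
Proof.
move=> k0 n1; set P := k * n.-1; set F := 4 ^ k => hT; have hF : F = 4 ^ k by []; have hP : P = k * n.-1 by []; clearbody P F.
set nr := fun a b => ~~ r a b.
have nrs : forall a b, nr a b = nr b a by move=> a b; rewrite /nr rs.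
set Rs := [set x | n.-1 <= #|nbr r x|].
set Bs := [set x | n.-1 <= #|nbr nr x|].
have cover : forall x, (x \in Rs) || (x \in Bs).
  move=> x; rewrite !inE; have h2 : #|nbr r x| + #|nbr nr x| = #|T|.-1 := deg_sum r x.
  case: (leqP n.-1 #|nbr r x|) => //= h1; lia.
have hU : #|Rs :|: Bs| = #|T|.
  apply/eqP; rewrite -cardsT eqn_leq subset_leq_card ?subsetT //=.
  by rewrite subset_leq_card //; apply/subsetP => x _; rewrite inE cover.
have hU2 := cardsU Rs Bs.
have hC1 := cardsC Rs; have hC2 := cardsC Bs.
have hI : #|Rs :&: Bs| <= #|Rs| by rewrite subset_leq_card // subsetIl.
have hI' : #|Rs :&: Bs| <= #|Bs| by rewrite subset_leq_card // subsetIr.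
have pick : forall Q : {set T}, k <= #|Q| -> exists x0, x0 \in Q.
  by move=> Q hQ; apply/card_gt0P; lia.
case: (leqP (4 ^ k) #|Rs :&: Bs|) => hIk.
  have h4 : 2 ^ (k + k) <= #|Rs :&: Bs| by rewrite expnD -expnMn.
  have [[Q [sQ [cQ hQ]]]|[Q [sQ [cQ hQ]]]] := ramsey rs (erefl (k + k)) h4.
  - left; have [x0 x0Q] := pick Q hQ; exists Q, x0; do 3!split => //.
    by move/subsetP: sQ => /(_ x0 x0Q); rewrite !inE => /andP[].
  - right; have [x0 x0Q] := pick Q hQ; exists Q, x0; do 3!split => //.
    by move/subsetP: sQ => /(_ x0 x0Q); rewrite !inE => /andP[].
have [hB|hR] : k * (n.-2).+1 <= #|~: Bs| \/ k * (n.-2).+1 <= #|~: Rs|.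
  have -> : (n.-2).+1 = n.-1 by lia.
  rewrite -hP; rewrite -hF in hIk; lia.
- have hD : forall x, x \in ~: Bs -> #|[set y in ~: Bs :\ x | ~~ r x y]| <= n.-2.
    move=> x; rewrite !inE => hx.
    have : #|[set y in ~: Bs :\ x | ~~ r x y]| <= #|nbr nr x|.
      apply: subset_leq_card; apply/subsetP => y; rewrite !inE.
      by move=> /andP[/andP[-> _]]; rewrite /nr.
    lia.
  have [Q [sQ [cQ hQ]]] := greedy rs hD hB.
  left; have [x0 x0Q] := pick Q hQ; exists Q, x0; do 3!split => //.
  move/subsetP: sQ => /(_ x0 x0Q); rewrite !inE => hx.
  by have := cover x0; rewrite !inE (negbTE hx) orbF.
- have hD : forall x, x \in ~: Rs -> #|[set y in ~: Rs :\ x | ~~ nr x y]| <= n.-2.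
    move=> x; rewrite !inE => hx.
    have : #|[set y in ~: Rs :\ x | ~~ nr x y]| <= #|nbr r x|.
      apply: subset_leq_card; apply/subsetP => y; rewrite !inE /nr negbK.
      by move=> /andP[/andP[-> _] ->].
    lia.
  have [Q [sQ [cQ hQ]]] := greedy nrs hD hR.
  right; have [x0 x0Q] := pick Q hQ; exists Q, x0; do 3!split => //.
  move/subsetP: sQ => /(_ x0 x0Q); rewrite !inE => hx.
  by have := cover x0; rewrite !inE (negbTE hx).
Qed.

End Comb.

Definition Gk (n k : nat) : rel 'I_n := fun u v =>
  (u != v) && [|| nat_of_ord u == 0, nat_of_ord v == 0 | (u < k) && (v < k)].

Lemma embed (T : finType) (r : rel T) (rs : forall a b, r a b = r b a) k n :
  0 < k -> good r k n ->
  exists f : 'I_n -> T, injective f /\ forall u v, Gk k u v -> r (f u) (f v).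
Proof.
move=> k0 [Q [x0 [cQ [hQ [x0Q hdeg]]]]].
set S := nbr r x0.
set L1 := enum (Q :\ x0); set L2 := enum (S :\: Q).
set L := x0 :: (L1 ++ L2).
have x0S : x0 \notin S by rewrite !inE eqxx.
have uL : uniq L.
  rewrite /= cat_uniq !enum_uniq /= mem_cat !mem_enum !inE eqxx /=.
  rewrite andbF /= andbT.
  by apply/hasPn => y; rewrite /L1 /L2 !mem_enum !inE => /andP[yQ _]; rewrite (negbTE yQ) andbF.
have sizeL : n <= size L.
  rewrite /= size_cat /L1 /L2 -!cardE.
  have := cardsID Q S.
  have : #|S :&: Q| <= #|Q :\ x0|.
    apply: subset_leq_card; apply/subsetP => z; rewrite /S /nbr !inE.
    by case/andP=> /andP[/andP[-> _] _] ->.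
  have hd : n.-1 <= #|S| := hdeg; lia.
have q1 : #|Q| = #|Q :\ x0|.+1 by rewrite (cardsD1 x0 Q) x0Q.
have memQ : forall w, w < k -> nth x0 L w \in Q.
  case=> [|w] hw //=.
  rewrite nth_cat /L1 -cardE ifT; last by lia.
  have : nth x0 (enum (Q :\ x0)) w \in enum (Q :\ x0).
    by apply: mem_nth; rewrite -cardE; lia.
  by rewrite mem_enum !inE => /andP[].
have adj0 : forall w, 0 < w < size L -> r x0 (nth x0 L w).
  case=> [|w] //= hw.
  have : nth x0 (L1 ++ L2) w \in L1 ++ L2 by apply: mem_nth; exact: hw.
  rewrite mem_cat !mem_enum !inE => /orP[/andP[yx yQ]|/andP[_ /andP[/andP[yx _] ry]]] //.
  by apply: cQ => //; rewrite eq_sym.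
exists (fun w => nth x0 L w); split.
  move=> u v /eqP; rewrite nth_uniq //; [by move/eqP; apply: val_inj| |];
  by apply: leq_trans (ltn_ord _) sizeL.
move=> u v /andP[uv /or3P[/eqP u0|/eqP v0|/andP[uk vk]]].
- have -> : nth x0 L u = x0 by rewrite u0.
  apply: adj0; apply/andP; split; last by apply: leq_trans (ltn_ord _) sizeL.
  rewrite lt0n; apply: contra uv => /eqP v0; apply/eqP/val_inj => /=; by rewrite u0 v0.
- have -> : nth x0 L v = x0 by rewrite v0.
  rewrite rs; apply: adj0; apply/andP; split; last by apply: leq_trans (ltn_ord _) sizeL.
  rewrite lt0n; apply: contra uv => /eqP u0; apply/eqP/val_inj => /=; by rewrite u0 v0.
- apply: cQ; [exact: memQ|exact: memQ|].
  rewrite nth_uniq //; by apply: leq_trans (ltn_ord _) sizeL.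
Qed.

Lemma no_inj m (g : 'I_m.+1 -> 'I_m) : ~ injective g.
Proof. by move/leq_card; rewrite !card_ord ltnn. Qed.

Lemma lower d K N : 0 < d -> 0 < K -> K <= d -> N <= K ^ 2 * d ->
  ~ ramsey_arrow 3 N (@Gk d.+1 K.+1).
Proof.
move=> d0 K0 Kd hN arr.
pose b (x : 'I_N) := x %/ d.
pose i x := b x %/ K.
pose j x := b x %% K.
pose c0 : 'I_3 := @Ordinal 3 0 isT.
pose c1 : 'I_3 := @Ordinal 3 1 isT.
pose c2 : 'I_3 := @Ordinal 3 2 isT.
pose col (x y : 'I_N) := if b x == b y then c0 else if i x != i y then c1 else c2.
have colS : edge_colouring col.
  by move=> x y; rewrite /col eq_sym [i x == _]eq_sym.
have [c [f [finj hf]]] := arr col colS.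
have ilt : forall x, i x < K.
  move=> x; rewrite /i ltn_divLR // /b ltn_divLR //.
  by apply: leq_trans (ltn_ord x) _; rewrite mulnn.
have jlt : forall x, j x < K by move=> x; rewrite /j ltn_pmod.
have Kn : K.+1 <= d.+1 by [].
case: c hf => [[|[|[|m]]] hm] hf.
-
  pose z : 'I_d.+1 := ord0.
  have hb : forall v, b (f v) = b (f z).
    move=> v; case: (eqVneq v z) => [->//|vz].
    have := hf z v; rewrite /Gk eq_sym vz /= => /(_ isT).
    rewrite /col; case: (b (f z) == b (f v)) /eqP => // _.
    by case: ifP.
  pose g (v : 'I_d.+1) : 'I_d := Ordinal (ltn_pmod (f v) d0).
  apply: (@no_inj d g) => u v /(congr1 val) /= hm'.
  apply: finj; apply: val_inj => /=.
  by rewrite (divn_eq (f u) d) (divn_eq (f v) d) -/(b _) -/(b _) hb (hb v) hm'.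
-
  pose g (w : 'I_K.+1) : 'I_K := Ordinal (ilt (f (widen_ord Kn w))).
  apply: (@no_inj K g) => u v /(congr1 val) /= he.
  apply/eqP; apply: contraT => uv.
  have uv' : widen_ord Kn u != widen_ord Kn v.
    by apply: contra uv => /eqP /(congr1 val) /= e; apply/eqP/val_inj.
  have := hf (widen_ord Kn u) (widen_ord Kn v).
  rewrite /Gk uv' /= !ltn_ord !orbT => /(_ isT).
  rewrite /col he eqxx /=; by case: ifP => _ /(congr1 val).
-
  pose g (w : 'I_K.+1) : 'I_K := Ordinal (jlt (f (widen_ord Kn w))).
  apply: (@no_inj K g) => u v /(congr1 val) /= he.
  apply/eqP; apply: contraT => uv.
  have uv' : widen_ord Kn u != widen_ord Kn v.
    by apply: contra uv => /eqP /(congr1 val) /= e; apply/eqP/val_inj.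
  have := hf (widen_ord Kn u) (widen_ord Kn v).
  rewrite /Gk uv' /= !ltn_ord !orbT => /(_ isT).
  rewrite /col; case: eqP => // hbne; case: eqP => // hie _.
  suff : False by []. apply: hbne; move: hie he; rewrite /i /j => hie he.
  by rewrite (divn_eq (b (f (widen_ord Kn u))) K) hie he -divn_eq.
- by [].
Qed.

Open Scope R_scope.

Lemma INR_addn m n : INR (m + n)%N = INR m + INR n.
Proof. exact: plus_INR. Qed.
Lemma INR_muln m n : INR (m * n)%N = INR m * INR n.
Proof. exact: mult_INR. Qed.
Lemma INR_expn m n : INR (m ^ n)%N = INR m ^ n.
Proof. elim: n => [|n IH]; first by rewrite expn0 /=. by rewrite expnS INR_muln IH. Qed.
Lemma INR_leq m n : (m <= n)%N -> INR m <= INR n.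
Proof. by move/leP; apply: le_INR. Qed.

Lemma ln_le' x y : 0 < x -> x <= y -> ln x <= ln y.
Proof.
move=> x0 /Rle_lt_or_eq_dec [h|->]; last by apply: Rle_refl.
by apply: Rlt_le; apply: ln_increasing.
Qed.

Lemma ln4_ge1 : 1 <= ln 4.
Proof.
have := @ln_le' (exp 1) 4 (exp_pos 1) ltac:(have := exp_le_3; lra).
by rewrite ln_exp.
Qed.

Lemma ln4_lt2 : ln 4 < 2.
Proof.
have -> : 4 = 2 * 2 by lra.
rewrite ln_mult; try lra.
have : ln 2 < 1.
  have := ln_increasing 2 (exp 1) ltac:(lra) ltac:(have := exp_ineq1 1 ltac:(lra); lra).
  by rewrite ln_exp.
lra.
Qed.

Lemma k_le_ln n k : (0 < n)%N -> (4 ^ k <= n)%N -> INR k <= ln (INR n).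
Proof.
move=> n0 hk.
have h4 : 0 < INR 4 by rewrite /=; lra.
have := @ln_le' (INR (4 ^ k)) (INR n) ltac:(rewrite INR_expn; apply: pow_lt; exact h4) (INR_leq hk).
rewrite INR_expn ln_pow //.
have -> : INR 4 = 4 by rewrite /=; lra.
have := ln4_ge1; have := pos_INR k; nra.
Qed.

Lemma ln_lt_k n k : (0 < n)%N -> (n < 4 ^ k)%N -> ln (INR n) < 2 * INR k.
Proof.
move=> n0 hk.
have h4 : 0 < INR 4 by rewrite /=; lra.
have hn : 0 < INR n by apply: lt_0_INR; apply/ltP.
have := ln_increasing (INR n) (INR (4 ^ k)) hn ltac:(apply: lt_INR; apply/ltP; exact hk).
rewrite INR_expn ln_pow //.
have -> : INR 4 = 4 by rewrite /=; lra.
have := ln4_lt2; have := pos_INR k; nra.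
Qed.

Lemma ln_ge1 n : (3 <= n)%N -> 1 <= ln (INR n).
Proof.
move=> n3; have h3 := INR_leq n3.
have := @ln_le' (exp 1) (INR n) (exp_pos 1) ltac:(have := exp_le_3; move: h3; rewrite /=; lra).
by rewrite ln_exp.
Qed.

Close Scope R_scope.
From Stdlib Require Import Reals.

Definition Gr (n : nat) : rel 'I_n := @Gk n (trunc_log 4 n).

Theorem theorem1p4 :
  exists G : forall n : nat, rel 'I_n,
    (forall n, simple_graph (G n) /\ connected_graph (G n)) /\
    (exists C : R, (0 < C)%R /\ exists n0 : nat, forall n : nat, (n0 <= n)%N ->
        ramsey_le 2 (G n) (C * INR n * ln (INR n))%R) /\
    (exists c : R, (0 < c)%R /\ exists n0 : nat, forall n : nat, (n0 <= n)%N ->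
        ramsey_ge 3 (G n) (c * INR n * (ln (INR n)) ^ 2)%R).
Proof.
exists Gr; split; [|split].
- move=> n; split; first split.
  + move=> x y; rewrite /Gr /Gk eq_sym.
    by case: (nat_of_ord x == 0); case: (nat_of_ord y == 0); rewrite //= [(x < _) && _]andbC.
  + by move=> x; rewrite /Gr /Gk eqxx.
  + move=> x y.
    pose z : 'I_n := Ordinal (leq_ltn_trans (leq0n x) (ltn_ord x)).
    apply: (@connect_trans _ _ z).
    * case: (eqVneq x z) => [->|xz]; first exact: connect0.
      by apply: connect1; rewrite /Gr /Gk xz /= orbT.
    * case: (eqVneq z y) => [->|zy]; first exact: connect0.
      by apply: connect1; rewrite /Gr /Gk zy /=.
- exists 5%R; split; first lra.
  exists 64 => n hn.
  set k := trunc_log 4 n.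
  have k3 : 3 <= k by apply: trunc_log_max => //; rewrite (leq_trans _ hn).
  have hk : expn 4 k <= n by apply: trunc_logP => //; lia.
  exists (expn 4 k + 2 * (k * n.-1) + 2 * n); split.
  + have hN : expn 4 k + 2 * (k * n.-1) + 2 * n <= 3 * n + 2 * (k * n).
      have : k * n.-1 <= k * n by apply: leq_mul => //; lia.
      lia.
    apply: Rle_trans (INR_leq hN) _.
    rewrite !INR_addn !INR_muln.
    have h1 := ln_ge1 (n := n) ltac:(lia).
    have h2 := k_le_ln (n := n) (k := k) ltac:(lia) hk.
    have h3 := pos_INR n; have h4 := pos_INR k.
    rewrite (_ : INR 0 = 0%R) //.
    nra.
  + move=> col colS.
    set r := fun x y : 'I_(expn 4 k + 2 * (k * n.-1) + 2 * n) => col x y == ord0.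
    have rs : forall a b, r a b = r b a by move=> a b; rewrite /r colS.
    have nrs : forall a b, ~~ r a b = ~~ r b a by move=> a b; rewrite rs.
    have [hg|hg] := @upper _ r rs k n ltac:(lia) ltac:(lia) ltac:(by rewrite card_ord).
    * have [f [finj hf]] := embed (k := k) (n := n) rs ltac:(lia) hg.
      by exists ord0, f; split => // u v /hf /eqP.
    * have [f [finj hf]] := embed (k := k) (n := n) nrs ltac:(lia) hg.
      exists (@Ordinal 2 1 isT), f; split => // u v /hf; rewrite /r.
      by case: (col _ _) => [[|[|m]] hm] //= _; apply: val_inj.
- exists (1/32)%R; split; first lra.
  exists 64 => n hn N hN arr.
  case: n hn hN arr => [//|d] hn hN arr.
  move: arr; rewrite /Gr; set k := trunc_log 4 d.+1 => arr.
  have k3 : 3 <= k by apply: trunc_log_max => //; rewrite (leq_trans _ hn).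
  have hk : d.+1 < expn 4 k.+1 by apply: trunc_log_ltn.
  have hk2 : expn 4 k <= d.+1 by apply: trunc_logP.
  have kk : k < expn 4 k by apply: ltn_expl.
  set K := k.-1.
  have hkK : k = K.+1 by rewrite /K; lia.
  rewrite hkK in arr hk.
  apply: (@lower d K N) => //; try lia.
  have hy := ln_lt_k (n := d.+1) (k := K.+2) isT hk.
  have hy0 := ln_ge1 (n := d.+1) ltac:(lia).
  move: hN hy hy0; set y := ln (INR d.+1) => hN hy hy0.
  have hK : (2 <= INR K)%R by have := INR_leq (m := 2) (n := K) ltac:(lia); rewrite /=; lra.
  have hd : (63 <= INR d)%R.
    have := INR_leq (m := 63) (n := d) ltac:(lia); rewrite (_ : INR 63 = 63%R) //.
    by rewrite /=; lra.
  rewrite !S_INR in hN hy.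
  have hy2 : (y ^ 2 <= 16 * INR K ^ 2)%R by nra.
  have : (INR N < INR (muln (expn K 2) d))%R.
    rewrite INR_muln INR_expn.
    apply: Rlt_le_trans hN _.
    nra.
  by move/INR_lt => /ltP; lia.
Qed.
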